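(* Let $\mathcal P$ be a stationary Poisson point process of unit intensity on $\mathbb{R}^d$ and let $(A_n)_{n\ge1}$ be a sequence in $\mathfrak A$ with $A_n\to\mathbb{R}^d$. Let $\mathcal D_n=\mathcal D(\mathcal P\cap A_n)$ and $\mathring{\mathcal D}_n=\mathcal D((\mathcal P\cap A_n)\cup\{\mathbf 0\})$. Then there exist almost surely finite random variables $L,M$ and (random) simplices $\sigma_1,\dots,\sigma_L$ such that for all $n>M$, \[ \mathcal D_n\,\triangle\,\mathring{\mathcal D}_n=\{\sigma_1,\dots,\sigma_L\},\] and moreover $w(\sigma_i)\le M$ for all $i\le L$.
   Context: $W_m=\left[-\tfrac{m^{1/d}}{2},\tfrac{m^{1/d}}{2}\right]^d$; $\mathfrak A$ is the collection of sets $W_m+x$, $m\ge1$, $x\in\mathbb{R}^d$; $A_n\to\mathbb{R}^d$ means $\bigcup_{n}\bigcap_{m\ge n}A_m=\mathbb{R}^d$. For a finite set $\mathcal X\subset\mathbb{R}^d$ in general position, $\mathrm{Vor}_{\mathcal X}(x)=\{y:|y-x|\le|y-x'|\ \forall x'\in\mathcal X\}$, the Delaunay complex $\mathcal D(\mathcal X)$ consists of all $[x_0,\dots,x_k]$ with $\bigcap_i\mathrm{Vor}_{\mathcal X}(x_i)\ne\emptyset$, with weight $w([x_0,\dots,x_k])=\inf\{s:\bigcap_i(B_s(x_i)\cap\mathrm{Vor}_{\mathcal X}(x_i))\ne\emptyset\}$ (here computed in whichever of the two complexes contains the simplex). $\triangle$ denotes symmetric difference of sets of simplices. *)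

(* Defs.v *)
From HB Require Import structures.
From mathcomp Require Import all_boot all_order all_algebra.
From mathcomp Require Import all_classical all_reals all_analysis.
Set Implicit Arguments. Unset Strict Implicit. Unset Printing Implicit Defensive.
Import Order.TTheory GRing.Theory Num.Theory.
Local Open Scope classical_set_scope.
Local Open Scope ring_scope.

Section Geometry.
Variables (R : realType) (d : nat).
Notation V := 'rV[R]_d.

Definition edist (x y : V) : R :=
  Num.sqrt (\sum_(i < d) (x ord0 i - y ord0 i) ^+ 2).

Definition Vor (X : set V) (x : V) : set V :=
  [set y | forall x', X x' -> edist y x <= edist y x'].

Definition Delaunay (X : set V) : set (set V) :=
  [set S | [/\ S `<=` X, S !=set0, finite_set S &
            exists y, forall x, S x -> Vor X x y]].

Definition weight (X : set V) (S : set V) : R :=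
  inf [set s : R | exists y, forall x, S x -> edist y x <= s /\ Vor X x y].

Definition symdiff (D1 D2 : set (set V)) : set (set V) :=
  (D1 `\` D2) `|` (D2 `\` D1).

(* W_m + x, with W_m = [-m^{1/d}/2, m^{1/d}/2]^d *)
Definition Wbox (m : R) (x : V) : set V :=
  [set y | forall i : 'I_d,
     - (m `^ (d%:R)^-1) / 2 <= y ord0 i - x ord0 i <= (m `^ (d%:R)^-1) / 2].

Definition in_frakA (A : set V) : Prop :=
  exists (m : R) (x : V), 1 <= m /\ A = Wbox m x.

Definition tends_to_space (A : nat -> set V) : Prop :=
  \bigcup_n \bigcap_(m in [set m | (n <= m)%N]) A m = setT.

Definition hbox (a b : V) : set V :=
  [set y | forall i : 'I_d, a ord0 i <= y ord0 i < b ord0 i].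
Definition hbox_vol (a b : V) : R := \prod_(i < d) (b ord0 i - a ord0 i).

Definition has_card (A : set V) (k : nat) : Prop :=
  exists s : seq V, [/\ uniq s, [set x | x \in s] = A & size s = k].

End Geometry.

(* Pi : Omega -> set R^d is a (simple) Poisson point process of unit
   intensity on R^d under P: for every finite family of pairwise disjoint
   bounded half-open boxes B_1..B_k and counts n_1..n_k, the event
   {#(Pi cap B_j) = n_j for all j} is measurable and has probability
   prod_j exp(-vol B_j) vol(B_j)^{n_j} / n_j!
   (independent Poisson(Lebesgue) counts on disjoint boxes). *)
Definition unit_poisson_process (R : realType) (d : nat)
  (d0 : measure_display) (Omega : measurableType d0)
  (P : probability Omega R) (Pi : Omega -> set 'rV[R]_d) : Prop :=
  forall (k : nat) (a b : 'I_k -> 'rV[R]_d) (n : 'I_k -> nat),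
    (forall j i, a j ord0 i <= b j ord0 i) ->
    (forall j j', j != j' -> hbox (a j) (b j) `&` hbox (a j') (b j') = set0) ->
    let E := [set w | forall j, has_card (Pi w `&` hbox (a j) (b j)) (n j)] in
    measurable E /\
    P E = (\prod_(j < k)
             (expR (- hbox_vol (a j) (b j)) * hbox_vol (a j) (b j) ^+ n j
              / (n j)`!%:R))%:E.

(* Main.v *)
Require Import Defs.
From HB Require Import structures.
From mathcomp Require Import all_boot all_order all_algebra.
From mathcomp Require Import all_classical all_reals all_analysis.
From mathcomp Require Import ring lra.
Import Order.TTheory GRing.Theory Num.Theory.
Local Open Scope classical_set_scope.
Local Open Scope ring_scope.

Module Helpers.
Set Implicit Arguments. Unset Strict Implicit. Unset Printing Implicit Defensive.

Section Geo.
Variables (R : realType) (d : nat).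
Hypothesis hd : (0 < d)%N.
Notation V := 'rV[R]_d.
Implicit Types (x y z p : V) (X S : set V).

Definition sq (y x : V) : R := \sum_(i < d) (y ord0 i - x ord0 i) ^+ 2.

Lemma sq_ge0 y x : 0 <= sq y x.
Proof. by apply: sumr_ge0 => i _; exact: sqr_ge0. Qed.

Lemma edist_le y x x' : (Defs.edist y x <= Defs.edist y x') = (sq y x <= sq y x').
Proof. by rewrite /Defs.edist ler_sqrt // sq_ge0. Qed.

Lemma edist_sq y x s : 0 <= s -> sq y x <= s ^+ 2 -> Defs.edist y x <= s.
Proof.
move=> s0 h; rewrite /Defs.edist -(ger0_norm s0) -sqrtr_sqr ler_sqrt //.
exact: sqr_ge0.
Qed.

Lemma edist_ge0 (y x : V) : 0 <= Defs.edist y x.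
Proof. exact: sqrtr_ge0. Qed.

Definition cube (c : R) (z : V) := forall i, `|z ord0 i| <= c.

Lemma sq_term y x i : (y ord0 i - x ord0 i) ^+ 2 <= sq y x.
Proof.
rewrite /sq (bigD1 i) //= lerDl; apply: sumr_ge0 => j _; exact: sqr_ge0.
Qed.

Lemma sq_coord y x s i : 0 <= s -> sq y x <= s ^+ 2 ->
  `|y ord0 i - x ord0 i| <= s.
Proof.
move=> s0 h; have := le_trans (sq_term y x i) h.
by rewrite -real_normK ?num_real // ler_sqr ?nnegrE.
Qed.

Lemma cube_near y x a s : cube a y -> 0 <= s -> sq y x <= s ^+ 2 ->
  cube (a + s) x.
Proof.
move=> ha s0 h i; have h1 := sq_coord i s0 h; have h2 := ha i.
have -> : x ord0 i = y ord0 i - (y ord0 i - x ord0 i) by rewrite subKr.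
by apply: le_trans (ler_normB _ _) _; exact: lerD.
Qed.

Lemma cube_le a b z : a <= b -> cube a z -> cube b z.
Proof. by move=> ab h i; exact: le_trans (h i) ab. Qed.

Lemma cube0 a : 0 <= a -> cube a 0.
Proof. by move=> a0 i; rewrite mxE normr0. Qed.

Lemma sq_cube y x a b : cube a y -> cube b x -> 0 <= a -> 0 <= b ->
  sq y x <= (d%:R * (a + b)) ^+ 2.
Proof.
move=> ha hb a0 b0.
have ab0 : 0 <= a + b by rewrite addr_ge0.
apply: (@le_trans _ _ (\sum_(i < d) (a + b) ^+ 2)).
  apply: ler_sum => i _; rewrite -real_normK ?num_real // ler_sqr ?nnegrE //.
  by apply: le_trans (ler_normB _ _) _; exact: lerD.
rewrite sumr_const card_ord -[_ *+ d]mulr_natl [X in _ <= X]exprMn.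
apply: ler_wpM2r; first exact: sqr_ge0.
rewrite -natrX ler_nat; case: (d) hd => // n _.
by rewrite expnS leq_pmulr.
Qed.

Definition VorS (X : set V) (x y : V) := forall x', X x' -> sq y x <= sq y x'.

Lemma VorE X x y : Vor X x y <-> VorS X x y.
Proof. by split => h x' /h; rewrite edist_le. Qed.

Lemma DelE X S : Delaunay X S <->
  [/\ S `<=` X, S !=set0, finite_set S & exists y, forall x, S x -> VorS X x y].
Proof.
split => -[h1 h2 h3 [y hy]]; split => //; exists y => x /hy /VorE //.
Qed.

Lemma loc X X' K x y a s : X `&` cube K = X' `&` cube K -> cube a y -> 0 <= s ->
  sq y x <= s ^+ 2 -> a + s <= K -> VorS X x y -> VorS X' x y.
Proof.
move=> hXX ha s0 hs aK hV x' X'x'; rewrite leNgt; apply/negP => hlt.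
have hc : cube K x'.
  apply: cube_le aK _; apply: cube_near ha s0 _.
  exact: le_trans (ltW hlt) hs.
have : (X `&` cube K) x' by rewrite hXX.
by case => /hV; rewrite leNgt hlt.
Qed.

Lemma weight_le X S y s : S !=set0 ->
  (forall x, S x -> Defs.edist y x <= s /\ Vor X x y) -> weight X S <= s.
Proof.
move=> [x0 Sx0] h; rewrite /weight; apply: ge_inf; last by exists y.
exists 0 => s' [y' hy']; have [h1 _] := hy' x0 Sx0.
exact: le_trans (edist_ge0 _ _) h1.
Qed.



Definition Surround (F : set V) (K0 r : R) :=
  forall p y, cube K0 p -> (forall f, F f -> sq y p <= sq y f) -> cube r y.

Section Det.
Variables (Q : set V) (c0 r0 c1 r1 K : R) (f0 f1 : V).
Hypotheses (c0_ge0 : 0 <= c0) (r0_ge0 : 0 <= r0) (c1_ge0 : 0 <= c1) (r1_ge0 : 0 <= r1).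
Hypotheses (Qf0 : Q f0) (cf0 : cube c0 f0) (S0 : Surround (Q `&` cube c0) 0 r0).
Let K1 := r0 + d%:R * (r0 + c0).
Hypotheses (Qf1 : Q f1) (cf1 : cube c1 f1) (S1 : Surround (Q `&` cube c1) K1 r1).
Hypotheses (hK1 : K1 <= K) (hK2 : r1 + d%:R * (r1 + c1) <= K)
  (hc0 : c0 <= K) (hc1 : c1 <= K).

Definition matches X := X `&` cube K = Q `&` cube K.

Lemma d_ge0 : 0 <= d%:R :> R. Proof. exact: ler0n. Qed.

Lemma K0K : r0 + d%:R * r0 <= K.
Proof.
apply: le_trans hK1; rewrite lerD2l; apply: ler_wpM2l; first exact: d_ge0.
by rewrite lerDl.
Qed.

Lemma r0K : 0 <= K.
Proof. exact: le_trans hc0. Qed.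

Lemma matches_sub X c x : matches X -> c <= K -> Q x -> cube c x -> X x.
Proof.
move=> hm cK Qx cx; have : (Q `&` cube K) x by split => //; exact: cube_le cx.
by rewrite -hm => -[].
Qed.

Lemma matches_sub' X x : matches X -> X x -> cube K x -> Q x.
Proof. by move=> hm Xx cx; have : (X `&` cube K) x by []; rewrite hm => -[]. Qed.

Lemma matches0 X X' : matches X -> matches X' ->
  (X `|` [set 0]) `&` cube K = (X' `|` [set 0]) `&` cube K.
Proof.
move=> h h'; rewrite !setIUl h h'; done.
Qed.

Lemma matches1 X X' : matches X -> matches X' -> X `&` cube K = X' `&` cube K.
Proof. by move=> h h'; rewrite h h'. Qed.

Lemma surr0 X y : matches X -> (forall f, X f -> sq y 0 <= sq y f) -> cube r0 y.
Proof.
move=> hm h; apply: (S0 (p := 0)); first exact: cube0.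
move=> f [Qf cf]; apply: h; exact: matches_sub hc0 Qf cf.
Qed.

Lemma caseA X S : matches X -> Delaunay (X `|` [set 0]) S -> ~ Delaunay X S ->
  [/\ ~ X 0, S 0 & exists y, cube r0 y /\
     forall x, S x -> sq y x <= (d%:R * r0) ^+ 2 /\ VorS (X `|` [set 0]) x y].
Proof.
move=> hm /DelE [SX Sn Sf [y hy]] nD.
case: (pselect (S `<=` X)) => [SXX|nSX].
  exfalso; apply: nD; apply/DelE; split => //.
  by exists y => x Sx x' Xx'; apply: hy => //; left.
have [x /not_implyP [S0x nXx]] := (existsNP _).2 nSX.
have x0 : x = 0 by case: (SX x S0x).
subst x; split => //; exists y.
have cy : cube r0 y by apply: (surr0 hm) => f Xf; apply: hy => //; left.
split => // x Sx; split; last exact: hy.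
apply: le_trans (hy x Sx 0 (or_intror erefl)) _.
rewrite -[r0]addr0; apply: sq_cube => //; exact: cube0.
Qed.

Lemma caseB X S : matches X -> Delaunay X S -> ~ Delaunay (X `|` [set 0]) S ->
  exists y, cube r0 y /\
     forall x, S x -> sq y x <= (d%:R * (r0 + c0)) ^+ 2 /\ VorS X x y.
Proof.
move=> hm /DelE [SX Sn Sf [y hy]] nD.
have [x1 Sx1 lt1] : exists2 x1, S x1 & sq y 0 < sq y x1.
  apply: contrapT => hn; apply: nD; apply/DelE; split => //.
    by move=> x Sx; left; apply: SX.
  exists y => x Sx x' [Xx'|->]; first exact: hy.
  rewrite leNgt; apply/negP => hlt; apply: hn; by exists x.
have cy : cube r0 y.
  apply: (surr0 hm) => f Xf; apply: ltW; apply: lt_le_trans lt1 _.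
  exact: hy.
exists y; split => // x Sx; split; last exact: hy.
apply: le_trans (hy x Sx f0 _) _; first exact: matches_sub hc0 Qf0 cf0.
exact: sq_cube.
Qed.

Lemma caseB2 X S y : matches X -> S !=set0 -> (forall x, S x -> cube K1 x) ->
  (forall x, S x -> VorS (X `|` [set 0]) x y) ->
  cube r1 y /\ forall x, S x -> sq y x <= (d%:R * (r1 + c1)) ^+ 2.
Proof.
move=> hm [x0 Sx0] SK hv.
have Xf1 : (X `|` [set 0]) f1 by left; exact: matches_sub hc1 Qf1 cf1.
have cy : cube r1 y.
  apply: (S1 (p := x0)); first exact: SK.
  move=> f [Qf cf]; apply: hv => //; left; exact: matches_sub hc1 Qf cf.
split => // x Sx; apply: le_trans (hv x Sx f1 Xf1) _; exact: sq_cube.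
Qed.

Lemma det_incl X X' : matches X -> matches X' ->
  symdiff (Delaunay X) (Delaunay (X `|` [set 0])) `<=`
  symdiff (Delaunay X') (Delaunay (X' `|` [set 0])).
Proof.
move=> hm hm' S [[DX nDX0]|[DX0 nDX]].
- have [y [cy hy]] := caseB hm DX nDX0.
  have [SX Sn Sf _] := DX.
  have s0 : 0 <= d%:R * (r0 + c0) by rewrite mulr_ge0 ?d_ge0 ?addr_ge0.
  have SK1 : forall x, S x -> cube K1 x.
    by move=> x Sx; apply: cube_near cy s0 _; case: (hy x Sx).
  left; split.
    apply/DelE; split => //.
      move=> x Sx; apply: (matches_sub hm' hK1); last exact: SK1.
      apply: (matches_sub' hm); first exact: SX.
      exact: cube_le hK1 (SK1 x Sx).
    exists y => x Sx; have [h1 h2] := hy x Sx.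
    exact: (loc (matches1 hm hm') cy s0 h1 hK1 h2).
  move=> /DelE [SX' _ _ [y' hy']].
  have [cy' hb] := caseB2 hm' Sn SK1 hy'.
  have s1 : 0 <= d%:R * (r1 + c1) by rewrite mulr_ge0 ?d_ge0 ?addr_ge0.
  apply: nDX0; apply/DelE; split => //.
    by move=> x Sx; left; exact: SX.
  exists y' => x Sx.
  exact: (loc (matches0 hm' hm) cy' s1 (hb x Sx) hK2 (hy' x Sx)).
- have [nX0 S0' [y [cy hy]]] := caseA hm DX0 nDX.
  have [SX Sn Sf _] := DX0.
  have s0 : 0 <= d%:R * r0 by rewrite mulr_ge0 ?d_ge0.
  have SK : forall x, S x -> cube (r0 + d%:R * r0) x.
    by move=> x Sx; apply: cube_near cy s0 _; case: (hy x Sx).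
  right; split.
    apply/DelE; split => //.
      move=> x Sx.
      have : ((X `|` [set 0]) `&` cube K) x.
        by split; [exact: SX | exact: cube_le K0K (SK x Sx)].
      by rewrite (matches0 hm hm') => -[].
    exists y => x Sx; have [h1 h2] := hy x Sx.
    exact: (loc (matches0 hm hm') cy s0 h1 K0K h2).
  move=> /DelE [SX' _ _ _]; apply: nX0.
  apply: (matches_sub hm r0K); last exact: cube0 (lexx 0).
  exact: (matches_sub' hm' (SX' 0 S0') (cube0 r0K)).
Qed.

Lemma det_props X S : matches X ->
  symdiff (Delaunay X) (Delaunay (X `|` [set 0])) S ->
  [/\ S `<=` (Q `&` cube K) `|` [set 0],
      Delaunay X S -> weight X S <= d%:R * (r0 + c0) &
      Delaunay (X `|` [set 0]) S -> weight (X `|` [set 0]) S <= d%:R * (r0 + c0)].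
Proof.
move=> hm [[DX nDX0]|[DX0 nDX]].
- have [y [cy hy]] := caseB hm DX nDX0.
  have [SX Sn Sf _] := DX.
  have s0 : 0 <= d%:R * (r0 + c0) by rewrite mulr_ge0 ?d_ge0 ?addr_ge0.
  split => //.
  + move=> x Sx; left; split; last first.
      by apply: cube_le hK1 _; apply: cube_near cy s0 _; case: (hy x Sx).
    apply: (matches_sub' hm (SX x Sx)); apply: cube_le hK1 _.
    by apply: cube_near cy s0 _; case: (hy x Sx).
  + move=> _; apply: (weight_le (y := y)) => // x Sx; have [h1 h2] := hy x Sx.
    by split; [exact: edist_sq | exact/VorE].
- have [nX0 S0' [y [cy hy]]] := caseA hm DX0 nDX.
  have [SX Sn Sf _] := DX0.
  have s0 : 0 <= d%:R * r0 by rewrite mulr_ge0 ?d_ge0.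
  split => //.
  + move=> x Sx; case: (SX x Sx) => [Xx|->]; last by right.
    have cx : cube K x.
      by apply: cube_le K0K _; apply: cube_near cy s0 _; case: (hy x Sx).
    by left; split => //; exact: (matches_sub' hm Xx cx).
  + move=> _; apply: (weight_le (y := y)) => // x Sx; have [h1 h2] := hy x Sx.
    split; last exact/VorE.
    apply: le_trans (edist_sq s0 h1) _; apply: ler_wpM2l; first exact: d_ge0.
    by rewrite lerDl.
Qed.

End Det.

Definition sgn (b : bool) : R := if b then 1 else -1.
Definition ctr (i : 'I_d) (b : bool) (L : R) : V :=
  \row_j (if j == i then sgn b * (2 * d%:R * L) else 0).
Definition blo (i : 'I_d) (b : bool) (L : R) : V := \row_j (ctr i b L ord0 j - L / 2).
Definition bhi (i : 'I_d) (b : bool) (L : R) : V := \row_j (ctr i b L ord0 j + L / 2).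

Lemma in_box i b L f j : hbox (blo i b L) (bhi i b L) f ->
  `|f ord0 j - ctr i b L ord0 j| <= L / 2.
Proof.
move=> /(_ j); rewrite !mxE => /andP [h1 h2].
rewrite ler_norml; apply/andP; split.
  move: h1; set u := ctr i b L ord0 j; set v := f ord0 j => h1; lra.
move: h2; set u := ctr i b L ord0 j; set v := f ord0 j => h2; lra.
Qed.

Lemma ctr_norm i b L j : 0 <= L -> `|ctr i b L ord0 j| <= 2 * d%:R * L.
Proof.
move=> L0; rewrite mxE; case: eqP => _; last by rewrite normr0 !mulr_ge0 ?ler0n.
by rewrite normrM /sgn; case: b; rewrite ?normrN normr1 mul1r ger0_norm // !mulr_ge0 ?ler0n.
Qed.

Lemma box_cube i b (L B : R) f : 0 <= L -> L <= B -> hbox (blo i b L) (bhi i b L) f ->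
  cube ((2 * d%:R + 1) * B) f.
Proof.
move=> L0 LB hf j.
have h1 := in_box j hf; have h2 := ctr_norm i b j L0.
have -> : f ord0 j = ctr i b L ord0 j + (f ord0 j - ctr i b L ord0 j) by rewrite addrC subrK.
apply: le_trans (ler_normD _ _) _.
apply: (@le_trans _ _ ((2 * d%:R + 1) * L)); last first.
  by apply: ler_wpM2l => //; rewrite addr_ge0 ?mulr_ge0 ?ler0n.
rewrite mulrDl mul1r; apply: lerD => //; apply: le_trans h1 _.
lra.
Qed.

Lemma sum_ye y i b L : \sum_(j < d) y ord0 j * ctr i b L ord0 j =
  y ord0 i * (sgn b * (2 * d%:R * L)).
Proof.
rewrite (bigD1 i) //= big1 ?addr0; first by rewrite mxE eqxx.
by move=> j /negPf hj; rewrite mxE hj mulr0.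
Qed.

Lemma surround_key (K0 c L t : R) (yj pj fj ej : R) :
  `|yj| <= t -> `|pj| <= K0 -> `|fj| <= c -> `|fj - ej| <= L / 2 ->
  (yj - fj) ^+ 2 - (yj - pj) ^+ 2 <= c ^+ 2 + 2 * t * K0 + t * L - 2 * (yj * ej).
Proof.
move=> hy hp hf hfe.
have f2 : fj ^+ 2 <= c ^+ 2.
  by rewrite -real_normK ?num_real // ler_sqr ?nnegrE // (le_trans _ hf).
have p2 : 0 <= pj ^+ 2 by exact: sqr_ge0.
have yp : yj * pj <= t * K0.
  apply: le_trans (ler_norm _) _; rewrite normrM; apply: ler_pM => //.
have yfe : - (yj * (fj - ej)) <= t * (L / 2).
  rewrite -mulrN; apply: le_trans (ler_norm _) _; rewrite normrM normrN.
  by apply: ler_pM.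
have e : (yj - fj) ^+ 2 - (yj - pj) ^+ 2 =
   fj ^+ 2 - pj ^+ 2 - 2 * (yj * ej) - 2 * (yj * (fj - ej)) + 2 * (yj * pj).
  by ring.
rewrite e; lra.
Qed.


Lemma surround_of_boxes (Q : set V) (K0 B : R) (Lf : 'I_d -> bool -> R)
    (f : 'I_d -> bool -> V) :
  0 <= K0 -> (forall i b, K0 + 1 <= Lf i b) -> (forall i b, Lf i b <= B) ->
  (forall i b, Q (f i b) /\ hbox (blo i b (Lf i b)) (bhi i b (Lf i b)) (f i b)) ->
  Surround (Q `&` cube ((2 * d%:R + 1) * B)) K0 (((2 * d%:R + 1) * B) ^+ 2).
Proof.
move=> K00 hL hLB hf p y cp hyf.
set c := (2 * d%:R + 1) * B.
pose i0 := Ordinal hd.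
case: (@arg_maxP _ _ 'I_d i0 xpredT (fun j => `|y ord0 j|) erefl) => i _ hi.
set t := `|y ord0 i|.
set b := (0 <= y ord0 i).
set L := Lf i b.
have L0 : 0 <= L by apply: le_trans (hL i b); rewrite addr_ge0.
have [Qf hbf] := hf i b.
have cf := box_cube L0 (hLB i b) hbf.
have hsq := hyf (f i b) (conj Qf cf).
have ht : forall j, `|y ord0 j| <= t by move=> j; exact: hi.
have t0 : 0 <= t by exact: normr_ge0.
have hsum : sq y (f i b) - sq y p <=
    \sum_(j < d) (c ^+ 2 + 2 * t * K0 + t * L - 2 * (y ord0 j * ctr i b L ord0 j)).
  rewrite /sq -sumrB; apply: ler_sum => j _.
  apply: surround_key; [exact: ht | exact: cp | exact: cf | exact: in_box].
rewrite sumrB sumr_const card_ord -mulr_sumr sum_ye in hsum.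
have yt : y ord0 i * sgn b = t.
  rewrite /t /b /sgn; case: (boolP (0 <= y ord0 i)) => h.
    by rewrite mulr1 ger0_norm.
  by rewrite mulrN1 ltr0_norm // ltNge.
have e : y ord0 i * (sgn b * (2 * d%:R * L)) = t * (2 * d%:R * L).
  by rewrite mulrA yt.
rewrite e in hsum.
have hd' : 0 < d%:R :> R by rewrite ltr0n.
have key : 0 <= d%:R * (c ^+ 2 + 2 * t * K0 + t * L - 4 * (t * L)).
  have : 0 <= (c ^+ 2 + 2 * t * K0 + t * L) *+ d - 2 * (t * (2 * d%:R * L)).
    move: hsum hsq; set u := sq y (f i b); set v := sq y p; lra.
  by rewrite -mulr_natl; congr (0 <= _); ring.
rewrite pmulr_rge0 // in key.
have hL1 : K0 + 1 <= L := hL i b.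
have aux : 0 <= t * (3 * L - 2 * K0 - 1) by rewrite mulr_ge0 //; lra.
have tc : t <= c ^+ 2.
  have e2 : t * (3 * L - 2 * K0 - 1) = t * (3 * L - 2 * K0) - t by ring.
  have e3 : c ^+ 2 + 2 * t * K0 + t * L - 4 * (t * L) = c ^+ 2 - t * (3 * L - 2 * K0).
    by ring.
  rewrite e2 in aux; rewrite e3 in key; move: key aux.
  set u := t * (3 * L - 2 * K0); lra.
by move=> j; apply: le_trans (ht j) tc.
Qed.


Lemma surround_mono F K0 K1 r : Surround F K0 r -> K1 <= K0 -> Surround F K1 r.
Proof. by move=> h hK p y hp; apply: h; exact: cube_le hp. Qed.

Lemma surround_from (Q : set V) (k : nat) :
  (forall i b, exists n f, Q f /\
     hbox (blo i b (n + k).+1%:R) (bhi i b (n + k).+1%:R) f) ->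
  exists c r f0, [/\ 0 <= c, 0 <= r, Q f0, cube c f0 &
                     Surround (Q `&` cube c) k%:R r].
Proof.
move=> h.
have h' : forall ib : 'I_d * bool, exists nf : nat * V, Q nf.2 /\
    hbox (blo ib.1 ib.2 (nf.1 + k).+1%:R) (bhi ib.1 ib.2 (nf.1 + k).+1%:R) nf.2.
  by move=> [i b]; have [n [f hf]] := h i b; exists (n, f).
case: (choice h') => g hg.
pose Lf i b : R := ((g (i, b)).1 + k).+1%:R.
pose f i b := (g (i, b)).2.
pose B : R := (\max_(ib : 'I_d * bool) ((g ib).1 + k).+1)%:R.
have LB i b : Lf i b <= B.
  by rewrite ler_nat; apply: (@leq_bigmax _ (fun ib => ((g ib).1 + k).+1) (i, b)).
have hL i b : k%:R + 1 <= Lf i b.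
  by rewrite -[1]/(1%:R) -natrD ler_nat addn1 ltnS leq_addl.
have L0 i b : 0 <= Lf i b by exact: ler0n.
have B0 : 0 <= B by exact: ler0n.
have c0 : 0 <= (2 * d%:R + 1) * B by rewrite mulr_ge0 // addr_ge0 // mulr_ge0.
exists ((2 * d%:R + 1) * B), (((2 * d%:R + 1) * B) ^+ 2), (f (Ordinal hd) true).
split => //.
- exact: sqr_ge0.
- exact: (hg (Ordinal hd, true)).1.
- exact: box_cube (L0 _ _) (LB _ _) (hg (Ordinal hd, true)).2.
- apply: (surround_of_boxes (ler0n R k) hL LB) => i b.
  exact: (hg (i, b)).
Qed.

Lemma enum_subsets (s : seq V) (T : set (set V)) :
  (forall S, T S -> S `<=` [set x | x \in s]) ->
  exists (L : nat) (sigma : nat -> set V), T = sigma @` [set i | (i < L)%N].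
Proof.
move=> hT.
pose g (t : (size s).-tuple bool) : set V := [set x | x \in mask t s].
pose ts := [seq t <- enum {: (size s).-tuple bool} | `[< T (g t) >]].
exists (size ts), (fun i => g (nth (nseq_tuple (size s) false) ts i)).
apply/seteqP; split.
- move=> S TS.
  pose t := map_tuple (fun x => `[< S x >]) (in_tuple s).
  have ht : mask t s = [seq x <- s | `[< S x >]] by rewrite filter_mask.
  have gt : g t = S.
    apply/seteqP; split => x; rewrite /g /= ht mem_filter.
      by move=> /andP [/asboolP].
    by move=> Sx; rewrite (asboolT Sx) /=; exact: hT Sx.
  have tin : t \in ts by rewrite mem_filter mem_enum andbT gt; exact/asboolP.
  exists (index t ts); first by rewrite /= index_mem.
  by rewrite nth_index.
- move=> _ [i hi <-].
  have := mem_nth (nseq_tuple (size s) false) hi.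
  by rewrite mem_filter => /andP [/asboolP].
Qed.

Lemma cube_hbox (K : R) (k : nat) z : K < k%:R -> cube K z ->
  hbox (const_mx (- k%:R)) (const_mx k%:R) z.
Proof.
move=> hK hz i; rewrite !mxE; have := hz i; rewrite ler_norml => /andP [h1 h2].
by apply/andP; split; lra.
Qed.

Lemma wbox_cube (m K : R) (x z : V) :
  Wbox m x (const_mx (- K)) -> Wbox m x (const_mx K) -> cube K z -> Wbox m x z.
Proof.
move=> h1 h2 hz i; have := h1 i; have := h2 i; have := hz i.
rewrite !mxE ler_norml => /andP [a1 a2] /andP [b1 b2] /andP [c1 c2].
by apply/andP; split; lra.
Qed.

End Geo.

Section Prob.
Import numFieldNormedType.Exports.
Variables (R : realType) (d : nat) (d0 : measure_display) (Omega : measurableType d0)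
  (P : probability Omega R) (Pi : Omega -> set 'rV[R]_d).
Hypothesis HP : unit_poisson_process P Pi.
Notation V := 'rV[R]_d.

Lemma aeI (Q : Omega -> Prop) (A : set Omega) : measurable A -> P A = 0%E ->
  (forall w, ~ Q w -> A w) -> {ae P, forall w, Q w}.
Proof. by move=> mA PA hA; exists A; split => // w /= nQ; exact: hA. Qed.

Lemma one_box (a b : V) (n : nat) : (forall i, a ord0 i <= b ord0 i) ->
  measurable [set w | has_card (Pi w `&` hbox a b) n] /\
  P [set w | has_card (Pi w `&` hbox a b) n] =
    (expR (- hbox_vol a b) * hbox_vol a b ^+ n / n`!%:R)%:E.
Proof.
move=> hab.
have := @HP 1%N (fun _ => a) (fun _ => b) (fun _ => n) (fun _ => hab).
have hdisj : forall j j' : 'I_1, j != j' ->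
    hbox a b `&` hbox a b = set0.
  by move=> j j'; rewrite (ord1 j) (ord1 j') eqxx.
move=> /(_ hdisj) /=.
have -> : [set w | forall j : 'I_1, has_card (Pi w `&` hbox a b) n] =
          [set w | has_card (Pi w `&` hbox a b) n].
  by apply/seteqP; split => w /= h; [exact: h ord0 | move=> j].
by rewrite big_ord1.
Qed.

Lemma has_card0 (X : set V) : has_card X 0 <-> X = set0.
Proof.
split => [[s [_ <- /size0nil ->]]|->]; first by apply/seteqP; split => x.
by exists [::]; split => //; apply/seteqP; split => x.
Qed.

Lemma has_card_uniq (X : set V) n m : has_card X n -> has_card X m -> n = m.
Proof.
move=> [s [us hs <-]] [s' [us' hs' <-]].
apply: perm_size; apply: uniq_perm => // x.
have : [set x | x \in s] x <-> [set x | x \in s'] x by rewrite hs hs'.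
by move=> [h1 h2]; apply/idP/idP => h; [exact: h1 | exact: h2].
Qed.

Lemma le_inv_nat (x : \bar R) : (0 <= x)%E ->
  (forall n : nat, (x <= ((n.+1)%:R^-1)%:E)%E) -> x = 0%E.
Proof.
move=> x0 h; have x1 := h 0%N; rewrite invr1 in x1.
have [r xr] : exists r, x = r%:E.
  by case: x x0 x1 {h} => [r| |] //; exists r.
subst x; rewrite lee_fin in x0; congr EFin; apply/eqP; rewrite eq_le x0 andbT.
rewrite leNgt; apply/negP => r0.
have hr : 0 <= r^-1 by rewrite invr_ge0 ltW.
have /andP [_ hlt] := trunc_itv hr.
have := h (Num.Def.trunc (r^-1)); rewrite lee_fin.
move: hlt; set t := (Num.Def.trunc r^-1).+1%:R => hlt hle.
have t0 : 0 < t by rewrite ltr0n.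
have e1 : r * r^-1 = 1 by rewrite mulfV // gt_eqF.
have e2 : t * t^-1 = 1 by rewrite mulfV // gt_eqF.
have ri0 : 0 < r^-1 by rewrite invr_gt0.
have ti0 : 0 < t^-1 by rewrite invr_gt0.
clear h x1; clearbody t; nra.
Qed.


Hypothesis hd : (0 < d)%N.

Lemma box_le (i : 'I_d) (b : bool) (L : R) : 0 <= L ->
  forall j, blo i b L ord0 j <= bhi i b L ord0 j.
Proof. move=> L0 j; rewrite !mxE; lra. Qed.

Lemma box_vol (i : 'I_d) (b : bool) (L : R) :
  hbox_vol (blo i b L) (bhi i b L) = L ^+ d.
Proof.
rewrite /hbox_vol (eq_bigr (fun _ => L)) ?prodr_const ?card_ord // => j _.
rewrite !mxE.
set u := (if _ then _ else _); lra.
Qed.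

Lemma expN_le (v : R) (m : nat) : m%:R <= v -> expR (- v) <= (m.+1%:R)^-1.
Proof.
move=> hv; rewrite expRN lef_pV2 ?posrE ?expR_gt0 ?ltr0n //.
apply: le_trans (expR_ge1Dx v); rewrite -addn1 natrD addrC lerD2l //.
Qed.

Lemma dir_ae (k : nat) (i : 'I_d) (b : bool) :
  {ae P, forall w, exists n : nat, exists f, Pi w f /\
      hbox (blo i b (n + k).+1%:R) (bhi i b (n + k).+1%:R) f}.
Proof.
pose E n := [set w | has_card (Pi w `&` hbox (blo i b (n + k).+1%:R)
                                          (bhi i b (n + k).+1%:R)) 0].
have hE n := one_box 0 (box_le i b (ler0n R (n + k).+1)).
apply: (aeI (A := \bigcap_n E n)).
- by apply: bigcapT_measurable => n; exact: (hE n).1.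
- apply: le_inv_nat => // m.
  apply: (@le_trans _ _ (P (E m))).
    apply: le_measure; rewrite ?inE; first exact: bigcapT_measurable (fun n => (hE n).1).
      exact: (hE m).1.
    by move=> w /(_ m I).
  rewrite (hE m).2 box_vol expr0 fact0 divr1 mulr1 lee_fin.
  apply: expN_le; apply: (@le_trans _ _ (m + k).+1%:R).
    by rewrite ler_nat; apply: leq_trans (leq_addr k m) _.
  by apply: ler_eXnr => //; rewrite ler1n.
- move=> w nQ n _; apply/has_card0; apply/seteqP; split => // f [Pf hf].
  by apply: nQ; exists n, f.
Qed.


Lemma lim_zero (x : \bar R) (u : R^nat) : (0 <= x)%E -> cvgn u -> limn u = 1 ->
  (forall N, x <= (1 - u N)%:E)%E -> x = 0%E.
Proof.
case: x => [r| |] // x0 cv hl hle; last by have := hle 0%N.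
have r0 : 0 <= r by rewrite -lee_fin.
congr EFin; apply/eqP; rewrite eq_le r0 andbT.
have : limn u <= 1 - r.
  apply: limr_le => //; apply: nearW => N /=.
  by have := hle N; rewrite lee_fin; lra.
by rewrite hl; lra.
Qed.

Lemma fin_ae (k : nat) : {ae P, forall w, exists n,
  has_card (Pi w `&` hbox (const_mx (- k%:R)) (const_mx k%:R)) n}.
Proof.
set a : V := const_mx (- k%:R); set b : V := const_mx k%:R.
have hab : forall j, a ord0 j <= b ord0 j.
  by move=> j; rewrite !mxE; have := ler0n R k; lra.
set v := hbox_vol a b.
pose E n := [set w | has_card (Pi w `&` hbox a b) n].
have hE n := one_box n hab.
have mE n : measurable (E n) := (hE n).1.
pose U N := \big[setU/set0]_(n < N) E n.
have mU N : measurable (U N) by apply: bigsetU_measurable => n _.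
have tE : trivIset setT E.
  apply/trivIsetP => i j _ _ ij; apply/seteqP; split => // w [h1 h2].
  by move/eqP: ij; apply; exact: has_card_uniq h1 h2.
apply: (aeI (A := \bigcap_N ~` U N)).
- by apply: bigcapT_measurable => N; exact: measurableC.
- have mA : measurable (\bigcap_N ~` U N).
    by apply: bigcapT_measurable => N; exact: measurableC.
  set c := expR (- v).
  have hle N : (P (\bigcap_N ~` U N) <= (1 - c * series (exp_coeff v) N)%:E)%E.
    apply: (@le_trans _ _ (P (~` U N))).
      apply: le_measure; rewrite ?inE //; first exact: measurableC.
      by move=> w /(_ N I).
    rewrite probability_setC // /U measure_bigsetU //.
    rewrite (eq_bigr (fun n : 'I_N => (c * exp_coeff v n)%:E)); last first.
      move=> n _; rewrite /E; apply: (etrans (hE n).2).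
      by rewrite /exp_coeff /= mulrA.
    rewrite sumEFin EFinB lee_fin lerD2l lerN2 /series /= big_mkord mulr_sumr.
    by [].
  have cv : cvgn ((fun _ => c) \* series (exp_coeff v)).
    by apply: is_cvgM; [exact: is_cvg_cst | exact: is_cvg_series_exp_coeff].
  have hlim : limn ((fun _ => c) \* series (exp_coeff v)) = 1.
    rewrite limM; [|exact: is_cvg_cst|exact: is_cvg_series_exp_coeff].
    rewrite lim_cst; last exact: norm_hausdorff.
    rewrite -/(expR v) /c expRN mulVf // gt_eqF // expR_gt0 //.
  exact: (lim_zero (measure_ge0 P _) cv hlim hle).
- move=> w nQ N _ hU; apply: nQ.
  move: hU; rewrite /U -bigcup_mkord => -[n _ hn]; by exists n.
Qed.

End Prob.

End Helpers.
Import Helpers.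

Theorem proposition3p12 (R : realType) (d : nat) (hd : (0 < d)%N)
  (d0 : measure_display) (Omega : measurableType d0)
  (P : probability Omega R) (Pi : Omega -> set 'rV[R]_d)
  (A : nat -> set 'rV[R]_d) :
  unit_poisson_process P Pi ->
  (forall n, in_frakA (A n)) ->
  tends_to_space A ->
  {ae P, forall w, exists (L : nat) (M : R) (sigma : nat -> set 'rV[R]_d),
     forall n : nat, M < n%:R ->
       let X := Pi w `&` A n in
       let X0 := X `|` [set 0] in
       symdiff (Delaunay X) (Delaunay X0) = sigma @` [set i | (i < L)%N] /\
       (forall i, (i < L)%N ->
          (Delaunay X (sigma i) -> weight X (sigma i) <= M) /\
          (Delaunay X0 (sigma i) -> weight X0 (sigma i) <= M))}.
Proof.
move=> HP hA htend.
have E1 : {ae P, forall w, forall k : nat, forall i : 'I_d, forall b : bool,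
    exists n f, Pi w f /\ hbox (blo i b (n + k).+1%:R) (bhi i b (n + k).+1%:R) f}.
  apply: (ae_foralln (P := fun k w => forall i : 'I_d, forall b : bool,
    exists n f, Pi w f /\ hbox (blo i b (n + k).+1%:R) (bhi i b (n + k).+1%:R) f)) => k.
  apply: filter_forall => i; apply: filter_forall => b.
  exact: dir_ae HP hd k i b.
have E2 : {ae P, forall w, forall k : nat, exists n,
    has_card (Pi w `&` hbox (const_mx (- k%:R)) (const_mx k%:R)) n}.
  apply: (ae_foralln (P := fun k w => exists n,
    has_card (Pi w `&` hbox (const_mx (- k%:R)) (const_mx k%:R)) n)) => k.
  exact: fin_ae HP k.
apply: filterS2 E1 E2 => w H1 H2.
set Q := Pi w.
have [c0 [r0 [f0 [c00 r00 Qf0 cf0 S0']]]] := surround_from hd (H1 0%N).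
have S0 : Surround (Q `&` cube c0) 0 r0 by apply: surround_mono S0' _; rewrite ler0n.
have dge0 : 0 <= d%:R :> R by exact: ler0n.
set K1 := r0 + d%:R * (r0 + c0).
have K10 : 0 <= K1 by rewrite addr_ge0 // mulr_ge0 // addr_ge0.
pose k1 := (Num.Def.trunc K1).+1.
have hk1 : K1 <= k1%:R by have /andP [_ /ltW] := trunc_itv K10.
have [c1 [r1 [f1 [c10 r10 Qf1 cf1 S1']]]] := surround_from hd (H1 k1).
have S1 : Surround (Q `&` cube c1) K1 r1 by apply: surround_mono S1' hk1.
set K2 := r1 + d%:R * (r1 + c1).
have K20 : 0 <= K2 by rewrite addr_ge0 // mulr_ge0 // addr_ge0.
set K := K1 + K2 + c0 + c1.
have hK1 : K1 <= K by rewrite /K; lra.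
have hK2 : K2 <= K by rewrite /K; lra.
have hc0 : c0 <= K by rewrite /K; lra.
have hc1 : c1 <= K by rewrite /K; lra.
have K0 : 0 <= K by rewrite /K; lra.
pose k2 := (Num.Def.trunc K).+1.
have hk2 : K < k2%:R by have /andP [_ ] := trunc_itv K0.
have [n2 [s0 [us0 hs0 _]]] := H2 k2.
have memQ z : Q z -> cube K z -> z \in s0.
  move=> Qz cz; have : (Q `&` hbox (const_mx (- k2%:R)) (const_mx k2%:R)) z.
    by split => //; exact: cube_hbox hk2 cz.
  by rewrite -hs0.
pose pm : 'rV[R]_d := const_mx (- K); pose pp : 'rV[R]_d := const_mx K.
have [na _ hna] : (\bigcup_n \bigcap_(m in [set m | (n <= m)%N]) A m) pm by rewrite htend.
have [nb _ hnb] : (\bigcup_n \bigcap_(m in [set m | (n <= m)%N]) A m) pp by rewrite htend.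
pose N := maxn na nb.
have hmatch m : (N <= m)%N -> matches Q K (Q `&` A m).
  move=> hm; have h1 := hna m (leq_trans (leq_maxl na nb) hm).
  have h2 := hnb m (leq_trans (leq_maxr na nb) hm).
  have [mm [x [_ eA]]] := hA m; rewrite eA in h1 h2.
  rewrite /matches eA; apply/seteqP; split => z; first by move=> [[Qz _] cz].
  move=> [Qz cz]; split => //; split => //; exact: wbox_cube h1 h2 cz.
pose T := symdiff (Delaunay (Q `&` A N)) (Delaunay ((Q `&` A N) `|` [set 0])).
have eqT m : (N <= m)%N ->
    symdiff (Delaunay (Q `&` A m)) (Delaunay ((Q `&` A m) `|` [set 0])) = T.
  move=> hm; apply/seteqP; split.
    exact: (det_incl hd c00 r00 c10 r10 Qf0 cf0 S0 Qf1 cf1 S1 hK1 hK2 hc0 hc1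
             (hmatch m hm) (hmatch N (leqnn N))).
  exact: (det_incl hd c00 r00 c10 r10 Qf0 cf0 S0 Qf1 cf1 S1 hK1 hK2 hc0 hc1
             (hmatch N (leqnn N)) (hmatch m hm)).
have [L [sigma hsig]] : exists (L : nat) (sigma : nat -> set 'rV[R]_d),
    T = sigma @` [set i | (i < L)%N].
  apply: (@enum_subsets _ _ (0 :: s0)) => S TS x Sx.
  have [hsub _ _] := det_props hd c00 r00 Qf0 cf0 S0 hK1 hc0 (hmatch N (leqnn N)) TS.
  case: (hsub x Sx) => [[Qx cx]|->]; rewrite /= in_cons; last by rewrite eqxx.
  by rewrite memQ // orbT.
exists L, (Num.max N%:R (d%:R * (r0 + c0))), sigma.
move=> n hn; cbv zeta.
have hNn : (N <= n)%N.
  have : N%:R < n%:R :> R by apply: le_lt_trans hn; rewrite le_max lexx.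
  by rewrite ltr_nat => /ltnW.
split; first by rewrite eqT.
move=> i hi.
have Ti : T (sigma i) by rewrite hsig; exists i.
rewrite -(eqT n hNn) in Ti.
have [_ w1 w2] := det_props hd c00 r00 Qf0 cf0 S0 hK1 hc0 (hmatch n hNn) Ti.
split => hD.
  by apply: le_trans (w1 hD) _; rewrite le_max lexx orbT.
by apply: le_trans (w2 hD) _; rewrite le_max lexx orbT.
Qed.
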